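(* Let $G=(m,n,\boldsymbol{c},\boldsymbol{d},r_{\max},r_{\min})$ be an interbank lending game whose lenders are indexed so that $c_1\le c_2\le\dots\le c_m$. Set $c_{m+1}=\infty$, $D=\sum_{k\in B}d_k$, and let $\bar m$ be the least index in $\{0,1,\dots,m\}$ such that $$c_{\bar m+1}>\frac{1}{m-\bar m+1}\Bigl(D-\sum_{\ell=1}^{\bar m}c_\ell\Bigr).$$ Let $\bar L=\{1,\dots,\bar m\}$ and $q=\frac{1}{m-\bar m+1}\bigl(1-\frac{\sum_{\ell\in\bar L}c_\ell}{D}\bigr)$. Define $\boldsymbol{s}^*$ by $s^*_{ij}=\frac{c_i}{D}d_j$ for $i\in\bar L$, $j\in B$, and $s^*_{ij}=q\,d_j$ for $i\in L\setminus\bar L$, $j\in B$; and define multipliers $\mu_i=(r_{\min}-r_{\max})\bigl(\frac{c_i}{D}-q\bigr)$ for $i\in\bar L$, $\mu_i=0$ for $i\in L\setminus\bar L$, and $\mu_{ij}=0$ for all $i\in L,j\in B$. Then $(\boldsymbol{s}^*,\boldsymbol{\mu})$ satisfies all of the following Karush–Kuhn–Tucker conditions for the problem of maximising $\Phi(\boldsymbol{s})$ subject to $\sum_{j\in B}s_{ij}\le c_i$ ($i\in L$) and $s_{ij}\ge0$ ($i\in L,j\in B$): (1) primal feasibility: $\sum_{j\in B}s^*_{ij}\le c_i$ and $s^*_{ij}\ge0$ for all $i,j$; (2) stationarity: for all $i\in L,j\in B$, $(r_{\min}-r_{\max})\bigl(\frac{1}{d_j}(s^*_{ij}+\sum_{k\in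 L}s^*_{kj})-1\bigr)-\mu_i+\mu_{ij}=0$ (the first term being $\partial\Phi/\partial s_{ij}$ at $\boldsymbol{s}^*$); (3) dual feasibility: $\mu_i\ge0$ and $\mu_{ij}\ge0$ for all $i,j$; (4) complementary slackness: $\mu_i(c_i-\sum_{j\in B}s^*_{ij})=0$ and $\mu_{ij}s^*_{ij}=0$ for all $i,j$. Consequently, $\boldsymbol{s}^*$ is the unique pure Nash equilibrium of $G$.
   Context: An interbank lending game $G=(m,n,\boldsymbol{c},\boldsymbol{d},r_{\max},r_{\min})$ consists of positive integers $m,n$, budgets $\boldsymbol{c}\in\mathbb{R}_{>0}^m$, demands $\boldsymbol{d}\in\mathbb{R}_{>0}^n$ and reals $0<r_{\min}<r_{\max}$. The players are the lenders $L=\{1,\dots,m\}$; $B=\{1,\dots,n\}$ is the set of borrowers. Lender $i$'s strategy set is $S_i=\{s_i\in\mathbb{R}_{\ge0}^n:\sum_{j\in B}s_{ij}\le c_i\}$, the strategy space is $\boldsymbol{S}=\prod_{i\in L}S_i$ with elements $\boldsymbol{s}=(s_{ij})$. The interest rate of borrower $j$ is $r_j(\boldsymbol{s})=(r_{\min}-r_{\max})\frac{\sum_{i\in L}s_{ij}}{d_j}+r_{\max}$ and lender $i$'s utility is $u_i(\boldsymbol{s})=\sum_{j\in B}(r_j(\boldsymbol{s})-r_{\min})s_{ij}$. A pure Nash equilibrium is $\boldsymbol{s}^*\in\boldsymbol{S}$ with $u_i(\boldsymbol{s}^* )\ge u_i(s_i,\boldsymbol{s}^*_{-i})$ for all $i\in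 L$, $s_i\in S_i$. The potential function is $$\Phi(\boldsymbol{s})=\sum_{j\in B}\sum_{i\in L}\Bigl((r_{\min}-r_{\max})\frac{\sum_{\ell=1}^{i}s_{\ell j}}{d_j}+r_{\max}-r_{\min}\Bigr)s_{ij},$$ equivalently $\Phi(\boldsymbol{s})=\sum_{j\in B}\Bigl(\frac{r_{\min}-r_{\max}}{2d_j}\bigl(\sum_{i}s_{ij}^2+(\sum_i s_{ij})^2\bigr)+(r_{\max}-r_{\min})\sum_i s_{ij}\Bigr)$. *)

(* Defs.v *)
(* Lenders are indexed by 'I_m (0-based: paper's lender i is ord i-1),
   borrowers by 'I_n; strategy profiles are m x n matrices s with s i j = s_{ij}. *)
From HB Require Import structures.
From mathcomp Require Import all_boot all_order all_algebra.
Set Implicit Arguments. Unset Strict Implicit. Unset Printing Implicit Defensive.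
Import Order.TTheory GRing.Theory Num.Theory.
Local Open Scope ring_scope.

Section Game.
Variables (R : realFieldType) (m n : nat).
Variables (c : 'I_m -> R) (d : 'I_n -> R) (rmax rmin : R).

Definition rate (s : 'M[R]_(m, n)) (j : 'I_n) : R :=
  (rmin - rmax) * ((\sum_(i < m) s i j) / d j) + rmax.

Definition utility (i : 'I_m) (s : 'M[R]_(m, n)) : R :=
  \sum_(j < n) (rate s j - rmin) * s i j.

Definition strategy_ok (i : 'I_m) (t : 'I_n -> R) : Prop :=
  (forall j, 0 <= t j) /\ \sum_(j < n) t j <= c i.

Definition profile_ok (s : 'M[R]_(m, n)) : Prop :=
  forall i, strategy_ok i (fun j => s i j).

Definition deviate (s : 'M[R]_(m, n)) (i : 'I_m) (t : 'I_n -> R) : 'M[R]_(m, n) :=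
  \matrix_(k, j) if k == i then t j else s k j.

Definition pure_NE (s : 'M[R]_(m, n)) : Prop :=
  profile_ok s /\
  forall i t, strategy_ok i t -> utility i (deviate s i t) <= utility i s.

Definition Dtot : R := \sum_(k < n) d k.

(* sum_{l=1}^{k} c_l (paper indexing) *)
Definition csum (k : nat) : R := \sum_(l < m | (l < k)%N) c l.

(* the condition defining mbar, for k in {0..m}:
   c_{k+1} > (D - sum_{l<=k} c_l)/(m-k+1), with c_{m+1} = +infinity
   (paper's c_{k+1} is c (ord k) here; vacuous for k = m). *)
Definition mbar_cond (k : nat) : Prop :=
  forall i : 'I_m, nat_of_ord i = k ->
    (Dtot - csum k) / ((m - k).+1)%:R < c i.

Definition qval (mb : nat) : R :=
  (1 - csum mb / Dtot) / ((m - mb).+1)%:R.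

Definition sstar (mb : nat) : 'M[R]_(m, n) :=
  \matrix_(i, j) if (i < mb)%N then c i / Dtot * d j else qval mb * d j.

Definition mu_i (mb : nat) (i : 'I_m) : R :=
  if (i < mb)%N then (rmin - rmax) * (c i / Dtot - qval mb) else 0.

Definition mu_ij (i : 'I_m) (j : 'I_n) : R := 0.

(* partial derivative of Phi wrt s_ij *)
Definition dPhi (s : 'M[R]_(m, n)) (i : 'I_m) (j : 'I_n) : R :=
  (rmin - rmax) * ((s i j + \sum_(k < m) s k j) / d j - 1).

End Game.

(* Main.v *)
Require Import Defs.
From HB Require Import structures.
From mathcomp Require Import all_boot all_order all_algebra.
From mathcomp Require Import ring lra.
Import Order.TTheory GRing.Theory Num.Theory.
Local Open Scope ring_scope.

Set Implicit Arguments.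
Section H.
Variables (R : realFieldType) (m n : nat).
Variables (c : 'I_m -> R) (d : 'I_n -> R) (rmax rmin : R).
Hypothesis dpos : forall j, 0 < d j.

Lemma col_dev (s : 'M[R]_(m, n)) i t j :
  \sum_k (deviate s i t) k j = \sum_k s k j - s i j + t j.
Proof.
rewrite (bigD1 i) //= [X in _ = X - _ + _](bigD1 i) //= !mxE eqxx.
have -> : \sum_(k | k != i) deviate s i t k j = \sum_(k | k != i) s k j.
  by apply: eq_bigr => k /negbTE hk; rewrite mxE hk.
ring.
Qed.

Definition gg (s : 'M[R]_(m, n)) i j := 1 - (\sum_k s k j + s i j) / d j.

Lemma util_diff (s : 'M[R]_(m, n)) i t :
  utility d rmax rmin i (deviate s i t) - utility d rmax rmin i s =
  (rmax - rmin) * \sum_j ((t j - s i j) * gg s i j - (t j - s i j)^+2 / d j).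
Proof.
rewrite /utility -sumrB mulr_sumr; apply: eq_bigr => j _.
rewrite /rate col_dev /gg mxE eqxx.
have := dpos j; rewrite lt0r => /andP [dn _].
field; exact dn.
Qed.

Hypothesis n0 : (0 < n)%N.

Lemma Dpos : 0 < Dtot d.
Proof.
rewrite /Dtot (bigD1 (Ordinal n0)) //=.
apply: ltr_pwDl; first exact: dpos.
by apply: sumr_ge0 => k _; apply: ltW.
Qed.

Lemma csumS k (hk : (k < m)%N) : csum c k.+1 = csum c k + c (Ordinal hk).
Proof.
rewrite /csum (bigD1 (Ordinal hk)) //= addrC; congr (_ + _).
apply: eq_bigl => l; rewrite -val_eqE /= ltnS.
by case: ltngtP.
Qed.

Lemma csum0 : csum c 0 = 0.
Proof. by rewrite /csum big1 // => l; rewrite ltn0. Qed.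

Definition AA k := (Dtot d - csum c k) / ((m - k).+1)%:R.

Lemma Amono mb : (mb <= m)%N -> (forall k, (k < mb)%N -> ~ mbar_cond c d k) ->
  forall k, (k <= mb)%N -> 0 < AA k /\ forall i : 'I_m, (i < k)%N -> c i <= AA k.
Proof.
move=> hmb nc; elim=> [_|k IH hk].
  split; last by [].
  rewrite /AA csum0 subr0; apply: divr_gt0; first exact: Dpos.
  by rewrite ltr0n.
have hkm : (k < mb)%N by [].
have hkm' : (k < m)%N by apply: leq_trans hmb.
have [Ap Ab] := IH (ltnW hkm).
have ck : c (Ordinal hkm') <= AA k.
  rewrite leNgt; apply/negP => h; apply: (nc k hkm) => i hi.
  have -> : i = Ordinal hkm' by apply: val_inj.
  exact h.
have xp : 0 < ((m - k)%:R : R) by rewrite ltr0n subn_gt0.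
have Ak1 : AA k.+1 = (Dtot d - csum c k - c (Ordinal hkm')) / (m - k)%:R.
  rewrite /AA csumS; congr (_ / _); first ring.
  by rewrite subnSK.
have AA_eq : AA k * ((m - k)%:R + 1) = Dtot d - csum c k.
  rewrite /AA natr1 divfK //; by rewrite pnatr_eq0.
have le : AA k <= AA k.+1.
  rewrite Ak1 ler_pdivlMr //; nra.
split; first by apply: lt_le_trans le.
move=> i; rewrite ltnS leq_eqVlt => /orP [/eqP hi|hi].
  have -> : i = Ordinal hkm' by apply: val_inj.
  exact: le_trans le.
exact: le_trans (Ab i hi) le.
Qed.

Lemma dPhi_gg (s : 'M[R]_(m, n)) i j : dPhi d rmax rmin s i j = (rmax - rmin) * gg s i j.
Proof. rewrite /dPhi /gg; ring. Qed.

Lemma VI (s : 'M[R]_(m, n)) i mu0 t :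
  (forall j, (rmax - rmin) * gg s i j = mu0) -> 0 <= mu0 ->
  mu0 * (c i - \sum_j s i j) = 0 -> strategy_ok c i t ->
  (rmax - rmin) * \sum_j (t j - s i j) * gg s i j <= 0.
Proof.
move=> hg hmu hcs [_ ht].
rewrite mulr_sumr.
have -> : \sum_j (rmax - rmin) * ((t j - s i j) * gg s i j) = mu0 * (\sum_j t j - \sum_j s i j).
  rewrite -sumrB mulr_sumr; apply: eq_bigr => j _; rewrite -(hg j); ring.
have -> : mu0 * (\sum_j t j - \sum_j s i j) = mu0 * (\sum_j t j - c i) + mu0 * (c i - \sum_j s i j) by ring.
rewrite hcs addr0; apply: mulr_ge0_le0 => //; by rewrite subr_le0.
Qed.
End H.
Unset Implicit Arguments.
Arguments Dpos {R n d}.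
Arguments util_diff {R m n d rmax rmin}.
Arguments dPhi_gg {R m n d rmax rmin}.
Arguments gg {R m n}.
Arguments AA {R m n}.
Arguments VI {R m n c d rmax rmin s i mu0 t}.

Theorem theorem3p4 (R : realFieldType) (m n : nat) (c : 'I_m -> R) (d : 'I_n -> R)
  (rmax rmin : R) (mb : nat) :
  (0 < m)%N -> (0 < n)%N ->
  (forall i, 0 < c i) -> (forall j, 0 < d j) ->
  0 < rmin -> rmin < rmax ->
  (forall i1 i2 : 'I_m, (i1 <= i2)%N -> c i1 <= c i2) ->
  (* mb is the least index in {0,..,m} satisfying the defining condition *)
  (mb <= m)%N -> mbar_cond c d mb ->
  (forall k, (k < mb)%N -> ~ mbar_cond c d k) ->
  let s := sstar c d mb in
  let mu := mu_i c d rmax rmin mb in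
  (* (1) primal feasibility *)
  ((forall i, \sum_(j < n) s i j <= c i) /\ (forall i j, 0 <= s i j)) /\
  (* (2) stationarity *)
  (forall i j, dPhi d rmax rmin s i j - mu i + mu_ij R i j = 0) /\
  (* (3) dual feasibility *)
  ((forall i, 0 <= mu i) /\ (forall (i : 'I_m) (j : 'I_n), 0 <= mu_ij R i j)) /\
  (* (4) complementary slackness *)
  ((forall i, mu i * (c i - \sum_(j < n) s i j) = 0) /\
   (forall (i : 'I_m) (j : 'I_n), mu_ij R i j * s i j = 0)) /\
  (* s is the unique pure Nash equilibrium *)
  pure_NE c d rmax rmin s /\
  (forall s', pure_NE c d rmax rmin s' -> s' = s).
Proof.
move=> m0 n0 cpos dpos rminp rlt cmono hmb cond nc s mu.
have Dp := Dpos dpos n0.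
set D := Dtot d in Dp *.
have Dn : D != 0 by rewrite gt_eqF.
have [Ap Ab] := Amono dpos n0 mb hmb nc mb (leqnn mb).
set q := qval c d mb.
set M : R := (m - mb)%:R.
set S := csum c mb.
have M1 : M + 1 != 0 by rewrite /M natr1 pnatr_eq0.
have qM : S / D = 1 - q * (M + 1).
  by rewrite /q /qval /M natr1 divfK ?pnatr_eq0 // -/S -/D; ring.
have qD : q * D = AA c d mb.
  rewrite /AA -/S -/D -/M -natr1. rewrite -[S](@divfK _ D) // qM; field.
  exact: M1.
have qp : 0 < q.
  have -> : q = AA c d mb / D by rewrite -qD mulfK.
  exact: divr_gt0.
have ci_le : forall i : 'I_m, (i < mb)%N -> c i / D <= q.
  by move=> i hi; rewrite ler_pdivrMr // qD; apply: Ab.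
have ci_ge : forall i : 'I_m, ~~ (i < mb)%N -> q * D <= c i.
  move=> i; rewrite -leqNgt => hi.
  have hmbm : (mb < m)%N by apply: leq_ltn_trans hi (ltn_ord i).
  have := cond (Ordinal hmbm) erefl; rewrite -/D -/S => h.
  rewrite qD; apply: le_trans (ltW h) _; exact: cmono.
have sE : forall i j, s i j = (if (i < mb)%N then c i / D else q) * d j.
  by move=> i j; rewrite /s /sstar mxE; case: ifP.
have rowsum : forall i, \sum_j s i j = (if (i < mb)%N then c i / D else q) * D.
  by move=> i; rewrite (eq_bigr _ (fun j _ => sE i j)) -mulr_sumr.
have colsum : forall j, \sum_k s k j = (S / D + M * q) * d j.
  move=> j; rewrite (eq_bigr _ (fun k _ => sE k j)) -mulr_suml; congr (_ * d j).
  rewrite (bigID (fun k : 'I_m => (k < mb)%N)) /=; congr (_ + _).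
    rewrite /S /csum mulr_suml; apply: eq_bigr => k ->; by [].
  rewrite (eq_bigr (fun _ => q)); last by move=> k /negbTE ->.
  have e1 : \sum_(k < m) q = q *+ m by rewrite sumr_const card_ord.
  have e2 : \sum_(k < m | (k < mb)%N) q = q *+ mb.
    by rewrite (big_ord_narrow hmb) sumr_const card_ord.
  have e3 : \sum_(k < m | ~~ (k < mb)%N) q = \sum_(k < m) q - \sum_(k < m | (k < mb)%N) q.
    by rewrite [\sum_(k < m) q](bigID (fun k : 'I_m => (k < mb)%N)) /=; ring.
  by rewrite e3 e1 e2 /M natrB // mulrBl !mulr_natl.
have stat : forall i j, dPhi d rmax rmin s i j = mu i.
  move=> i j; have dn : d j != 0 by rewrite gt_eqF.
  rewrite /dPhi colsum sE /mu /mu_i -/D -/q; case: ifP => hi.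
    rewrite qM; field; by apply/andP; split.
  rewrite qM; field; by [].
have mu_ge : forall i, 0 <= mu i.
  move=> i; rewrite /mu /mu_i -/D -/q; case: ifP => hi //.
  apply: mulr_le0; first by rewrite subr_le0 ltW.
  by rewrite subr_le0; apply: ci_le; rewrite hi.
have cs : forall i, mu i * (c i - \sum_(j < n) s i j) = 0.
  move=> i; rewrite rowsum /mu /mu_i -/D -/q; case: ifP => hi; last by rewrite mul0r.
  by rewrite divfK // subrr mulr0.
have rowle : forall i, \sum_(j < n) s i j <= c i.
  move=> i; rewrite rowsum; case: ifP => hi; first by rewrite divfK.
  by apply: ci_ge; rewrite hi.
have sge : forall i j, 0 <= s i j.
  move=> i j; rewrite sE; apply: mulr_ge0; last exact: ltW.
  case: ifP => _; last exact: ltW.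
  by apply: divr_ge0; apply: ltW.
have hg : forall i j, (rmax - rmin) * gg d s i j = mu i.
  by move=> i j; rewrite -dPhi_gg stat.
have rp : 0 < rmax - rmin by rewrite subr_gt0.
have pok : profile_ok c s by move=> i; split.
have NE : pure_NE c d rmax rmin s.
  split => // i t ht; rewrite -subr_le0 (util_diff dpos).
  rewrite big_split /= sumrN mulrDr.
  apply: le_trans (lerD (VI (hg i) (mu_ge i) (cs i) ht) (_ : _ <= 0)) _; last by rewrite addr0.
  rewrite mulrN oppr_le0; apply: mulr_ge0; first exact: ltW.
  apply: sumr_ge0 => j _; apply: divr_ge0; [exact: sqr_ge0 | exact: ltW].
split; first by split.
split; first by move=> i j; rewrite stat /mu_ij subrr addr0.
split; first by split => // i j; rewrite /mu_ij.
split; first by split => // i j; rewrite /mu_ij mul0r.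
split; first exact: NE.
move=> s' [pok' NE'].
set dl := fun i j => s i j - s' i j.
set Dl := fun j => \sum_k s k j - \sum_k s' k j.
have E1 : forall i, \sum_j (dl i j * gg d s' i j - dl i j ^+ 2 / (2 * d j)) <= 0.
  move=> i.
  pose t := fun j => s' i j + (s i j - s' i j) / 2.
  have tok : strategy_ok c i t.
    have [h1 h2] := pok' i; have [h3 h4] := pok i.
    split.
      move=> j; rewrite /t; have := h1 j; have := h3 j; lra.
    rewrite /t big_split /= -mulr_suml sumrB; lra.
  have := NE' i t tok; rewrite -subr_le0 (util_diff dpos) pmulr_rle0 //.
  have -> : \sum_j ((t j - s' i j) * gg d s' i j - (t j - s' i j) ^+ 2 / d j) =
    (\sum_j (dl i j * gg d s' i j - dl i j ^+ 2 / (2 * d j))) / 2.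
    rewrite mulr_suml; apply: eq_bigr => j _; rewrite /t /dl.
    have dn : d j != 0 by rewrite gt_eqF.
    field; by [].
  by rewrite pmulr_lle0 // invr_gt0.
have E2 : forall i, \sum_j (- dl i j) * gg d s i j <= 0.
  move=> i; have := VI (hg i) (mu_ge i) (cs i) (pok' i).
  rewrite pmulr_rle0 //.
  move=> h; rewrite /dl; under eq_bigr => j _ do rewrite opprB.
  exact: h.
pose F := fun i j => dl i j * Dl j / d j + dl i j ^+ 2 / (2 * d j).
have sumF : \sum_i \sum_j F i j <= 0.
  apply: le_trans (_ : _ <= \sum_(i < m) (0:R)) _; last by rewrite big1.
  apply: ler_sum => i _; rewrite -[X in _ <= X](addr0 0).
  apply: le_trans (lerD (E1 i) (E2 i)).
  rewrite -big_split /=.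
  rewrite le_eqVlt; apply/orP; left; apply/eqP; apply: eq_bigr => j _; rewrite /F /gg /dl /Dl.
  have dn : d j != 0 by rewrite gt_eqF.
  field; by [].
have sumF2 : \sum_i \sum_j F i j =
   \sum_j Dl j ^+ 2 / d j + \sum_i \sum_j dl i j ^+ 2 / (2 * d j).
  rewrite /F (eq_bigr (fun i => \sum_j dl i j * Dl j / d j + \sum_j dl i j ^+ 2 / (2 * d j)));
    last by move=> i _; rewrite big_split.
  rewrite big_split /=; congr (_ + _).
  rewrite exchange_big /=; apply: eq_bigr => j _.
  rewrite -!mulr_suml /Dl /dl sumrB; ring.
have G0 : forall i j, 0 <= dl i j ^+ 2 / (2 * d j).
  move=> i j; apply: divr_ge0; first exact: sqr_ge0.
  by apply: mulr_ge0 => //; apply: ltW.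
have H0 : \sum_i \sum_j dl i j ^+ 2 / (2 * d j) = 0.
  apply/eqP; rewrite eq_le; apply/andP; split.
    have : 0 <= \sum_j Dl j ^+ 2 / d j.
      apply: sumr_ge0 => j _; apply: divr_ge0; [exact: sqr_ge0 | exact: ltW].
    rewrite sumF2 in sumF; lra.
  by apply: sumr_ge0 => i _; apply: sumr_ge0 => j _; apply: G0.
apply/matrixP => i j.
have Hi : \sum_j dl i j ^+ 2 / (2 * d j) = 0.
  apply: (psumr_eq0P _ H0) => // k _; apply: sumr_ge0 => j' _; exact: G0.
have Hij : dl i j ^+ 2 / (2 * d j) = 0.
  apply: (psumr_eq0P _ Hi) => // k _; exact: G0.
move: Hij; have dn : (2 * d j) != 0 by rewrite mulf_neq0 // gt_eqF.
move/eqP; rewrite mulf_eq0 invr_eq0 (negbTE dn) orbF sqrf_eq0 /dl subr_eq0.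
by move/eqP.
Qed.
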